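(* Let $q\ge3$ be an integer, $c\in\mathbb{R}$ and $\lambda\in(-1/q-c,-c)$ such that $f_c$ satisfies the pre-$q$-Sturmian condition for $\lambda$. Let $\theta=\lambda+1/q+c$. Then $\frac{3}{8q}<\theta<\frac{5}{8q}$.
   Context: $\mathbb{T}=\mathbb{R}/\mathbb{Z}$, $T(x)=qx\bmod1$. $f_c(x)=\log\left|\frac{\sin\pi q(x+c)}{\sin\pi(x+c)}\right|$. $C_\lambda=[\lambda,\lambda+1/q]\bmod1$. The function $f_c$ satisfies the pre-$q$-Sturmian condition for $\lambda$ if $f_c$ is Lipschitz on $C_\lambda$ and there exist a Lipschitz $\psi:\mathbb{T}\to\mathbb{R}$ and $\beta\in\mathbb{R}$ with $f_c(x)+\psi(x)-\psi(Tx)=\beta$ for all $x\in C_\lambda$. *)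

(* Defs.v *)
From Stdlib Require Import Reals.
Open Scope R_scope.

(* The circle T = R/Z is modelled by 1-periodic functions on R.
   The map T(x) = q x mod 1, computed on representatives. *)
Definition Tq (q : nat) (x : R) : R := frac_part (INR q * x).

(* f_c(x) = log | sin(pi q (x+c)) / sin(pi (x+c)) |, with the removable
   singularity at x + c in Z filled by its continuous value log q. *)
Definition f_c (q : nat) (c x : R) : R :=
  let y := x + c in
  if Req_EM_T (sin (PI * y)) 0 then ln (INR q)
  else ln (Rabs (sin (PI * INR q * y) / sin (PI * y))).

Definition in_C (q : nat) (lam x : R) : Prop :=
  exists k : Z, lam <= x + IZR k <= lam + 1 / INR q.

Definition one_periodic (g : R -> R) : Prop := forall x, g (x + 1) = g x.

(* Lipschitz on T (equivalent, for 1-periodic g, to Lipschitz on R). *)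
Definition lipschitz (g : R -> R) : Prop :=
  exists L : R, forall x y, Rabs (g x - g y) <= L * Rabs (x - y).

Definition lipschitz_on (A : R -> Prop) (g : R -> R) : Prop :=
  exists L : R, forall x y, A x -> A y -> Rabs (g x - g y) <= L * Rabs (x - y).

Definition pre_sturmian (q : nat) (c lam : R) : Prop :=
  lipschitz_on (in_C q lam) (f_c q c) /\
  exists (psi : R -> R) (beta : R),
    one_periodic psi /\ lipschitz psi /\
    forall x, in_C q lam x -> f_c q c x + psi x - psi (Tq q x) = beta.

(* Main.v *)
Require Import Defs.
From Stdlib Require Import Reals.
Open Scope R_scope.
From Stdlib Require Import Lra Lia Psatz ZArith.

Lemma PI_ub : PI <= 3.1416.
Proof.
  destruct (PI_2_3_7_ineq 2) as [_ H].
  unfold sum_f_R0, tg_alt, PI_2_3_7_tg, Ratan_seq in H. simpl in H.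
  lra.
Qed.
Lemma PI_lb : 3.1415 <= PI.
Proof.
  destruct (PI_2_3_7_ineq 2) as [H _].
  unfold sum_f_R0, tg_alt, PI_2_3_7_tg, Ratan_seq in H. simpl in H.
  lra.
Qed.
Lemma s_lb : 0.92387 <= sin (3*PI/8).
Proof.
  assert (Hc : cos (2 * (3*PI/8)) = 1 - 2 * sin (3*PI/8) * sin (3*PI/8)) by apply cos_2a_sin.
  replace (2 * (3*PI/8)) with (PI - PI/4) in Hc by field.
  rewrite Rtrigo_facts.cos_pi_minus, cos_PI4 in Hc.
  assert (Hs2 : sqrt 2 <= 1.41422).
  { rewrite <- (sqrt_square 1.41422) by lra. apply sqrt_le_1_alt. lra. }
  assert (H2 : 0 < sqrt 2) by apply Rlt_sqrt2_0.
  assert (Hinv : 1 / sqrt 2 >= 1/1.41422).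
  { apply Rle_ge. unfold Rdiv. rewrite !Rmult_1_l. apply Rinv_le_contravar; lra. }
  assert (Hpos : 0 < sin (3*PI/8)).
  { apply sin_gt_0. pose proof PI_RGT_0; lra. pose proof PI_RGT_0; lra. }
  nra.
Qed.
Lemma exp_bound : exp 0.2331 < 1.27.
Proof.
  set (y := 0.2331/8).
  assert (E : exp 0.2331 = (((exp y)^2)^2)^2).
  { replace 0.2331 with (((y+y)+(y+y))+((y+y)+(y+y))) by (unfold y; lra).
    rewrite !exp_plus. ring. }
  assert (H1 : exp y * exp (-y) = 1).
  { rewrite <- exp_plus. replace (y + -y) with 0 by ring. apply exp_0. }
  assert (H2 := exp_ineq1_le (-y)).
  assert (H3 : 0 < exp y) by apply exp_pos.
  assert (H4 : exp y <= 1.030013).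
  { unfold y in *. nra. }
  rewrite E.
  assert (H5: (exp y)^2 <= 1.030013^2) by (apply pow_incr; lra).
  assert (H6: ((exp y)^2)^2 <= (1.030013^2)^2) by (apply pow_incr; split; [apply pow_le; lra| lra]).
  assert (H7: (((exp y)^2)^2)^2 <= ((1.030013^2)^2)^2) by (apply pow_incr; split; [apply pow_le; apply pow_le; lra| lra]).
  simpl in *. lra.
Qed.
Lemma sin_lb3 a : 0 <= a -> a <= PI -> a - a*a*a/6 <= sin a.
Proof. intros H1 H2. destruct (sin_bound a 0 H1 H2) as [H _].
  unfold sin_approx, sin_term in H. simpl in H. lra. Qed.
Lemma sin_ub5 a : 0 <= a -> a <= PI -> sin a <= a - a*a*a/6 + a*a*a*a*a/120.
Proof. intros H1 H2. destruct (sin_bound a 0 H1 H2) as [_ H].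
  unfold sin_approx, sin_term in H. simpl in H. lra. Qed.

Lemma numeric (Q : R) : 3 <= Q ->
  let x := PI/(8*Q) in let s := sin (3*PI/8) in
  (Q+1)*PI^2*sin (3*x)/(8*Q^2*s) < ln (s * sin (5*x) / (Q * sin (3*x)^2)).
Proof.
  intros HQ x s.
  pose proof PI_ub as Pu. pose proof PI_lb as Pl. pose proof s_lb as Hs.
  fold s in Hs.
  assert (Hx0 : 0 < x) by (unfold x; apply Rdiv_lt_0_compat; lra).
  assert (HQx : Q * x = PI/8) by (unfold x; field; lra).
  assert (Hx1 : x <= 3.1416/24).
  { assert (x * 24 <= PI) by nra. lra. }
  set (u := x*x).
  assert (Hu0 : 0 <= u) by (unfold u; nra).
  assert (Hu1 : u <= 0.0171349) by (unfold u; nra).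
  assert (S5 := sin_lb3 (5*x) ltac:(lra) ltac:(lra)).
  assert (S3 := sin_ub5 (3*x) ltac:(lra) ltac:(lra)).
  assert (S3p : 0 < sin (3*x)) by (apply sin_gt_0; lra).
  assert (S3l : sin (3*x) <= 3*x) by (left; apply sin_lt_x; lra).
  assert (HR : (Q+1)*PI^2*sin (3*x)/(8*Q^2*s) <= 0.2331).
  { apply Rle_trans with ((Q+1)*PI^2*(3*x)/(8*Q^2*s)).
    - unfold Rdiv. apply Rmult_le_compat_r.
      + apply Rlt_le, Rinv_0_lt_compat. nra.
      + apply Rmult_le_compat_l; [nra|lra].
    - replace ((Q+1)*PI^2*(3*x)/(8*Q^2*s)) with (3*(Q+1)/Q * PI * u / s)
        by (unfold u; assert (HPI : PI = 8*Q*x) by lra; rewrite HPI; field; nra).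
      assert (3*(Q+1)/Q <= 4) by (apply Rmult_le_reg_r with Q; [lra| field_simplify; lra]).
      assert (0 <= 3*(Q+1)/Q) by (apply Rmult_le_pos; [lra| apply Rlt_le, Rinv_0_lt_compat; lra]).
      assert (T : 3 * (Q + 1) / Q * PI * u <= 4 * 3.1416 * u).
      { apply Rmult_le_compat_r; [lra|]. apply Rmult_le_compat; lra. }
      apply Rle_trans with (4 * 3.1416 * u / s).
      { unfold Rdiv; apply Rmult_le_compat_r; [apply Rlt_le, Rinv_0_lt_compat; lra | exact T]. }
      apply Rmult_le_reg_r with s; [lra|].
      unfold Rdiv; rewrite Rmult_assoc, Rinv_l, Rmult_1_r by lra.
      nra. }
  assert (HA : 1.27 <= s * sin (5*x) / (Q * sin (3*x)^2)).
  { apply Rmult_le_reg_r with (Q * sin (3*x)^2); [nra|].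
    unfold Rdiv; rewrite Rmult_assoc, Rinv_l, Rmult_1_r by nra.
    set (p := 3 - 9/2*u + 81/40*u*u).
    assert (Hp : 3*x - 3*x*(3*x)*(3*x)/6 + 3*x*(3*x)*(3*x)*(3*x)*(3*x)/120 = x * p) by (unfold p, u; clear; field).
    assert (Hp0 : 0 < p) by (unfold p; nra).
    assert (Hsq : sin (3*x)^2 <= x*x*p*p) by nra.
    assert (Hpoly : 0.92387 * (5 - 125*u/6) >= 1.27 * (3.1416/8) * (p*p)).
    { unfold p. assert (u*u <= 0.0171349*u) by nra. assert (u*u*u <= 0.0171349*u*u) by nra.
      assert (0 <= u*u*u*u) by nra. assert (0<= u*u*u) by nra. nra. }
    assert (L1 : s * sin (5*x) >= s * (x * (5 - 125*u/6))).
    { apply Rle_ge, Rmult_le_compat_l; [lra|]. unfold u. lra. }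
    assert (L2 : Q * sin (3*x)^2 <= Q * (x*x*p*p)) by (apply Rmult_le_compat_l; lra).
    assert (L3 : Q * (x*x*p*p) = (PI/8) * x * (p*p)) by (transitivity ((Q*x)*x*(p*p)); [ring| rewrite HQx; ring]).
    assert (L4 : s * (5 - 125*u/6) >= 0.92387 * (5 - 125*u/6)) by nra.
    assert (L5 : (PI/8)*(p*p) <= (3.1416/8)*(p*p)) by nra.
    nra. }
  apply Rle_lt_trans with 0.2331; [exact HR|].
  apply Rlt_le_trans with (ln 1.27).
  - rewrite <- (ln_exp 0.2331). apply ln_increasing; [apply exp_pos| apply exp_bound].
  - destruct (Req_dec 1.27 (s * sin (5*x) / (Q * sin (3*x)^2))) as [E|E].
    + rewrite E; lra.
    + left; apply ln_increasing; lra.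
Qed.


Fixpoint Dk (n : nat) (t : R) : R :=
  match n with
  | O => 0
  | S O => 1
  | S (S m as k) => Dk m t + 2 * cos (INR k * t)
  end.

Lemma Dk_SS m t : Dk (S (S m)) t = Dk m t + 2 * cos (INR (S m) * t).
Proof. destruct m; reflexivity. Qed.

Lemma two_step (P : nat -> Prop) : P O -> P 1%nat -> (forall m, P m -> P (S (S m))) -> forall n, P n.
Proof.
  intros H0 H1 HS n. assert (P n /\ P (S n)); [|tauto].
  induction n as [|n [IH1 IH2]]; split; auto.
Qed.

Lemma Dk_sin n t : sin t * Dk n t = sin (INR n * t).
Proof.
  induction n as [| |m IH] using two_step.
  - simpl. rewrite Rmult_0_l, sin_0. ring.
  - simpl. ring_simplify (1 * t). ring.
  - rewrite Dk_SS, Rmult_plus_distr_l, IH.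
    replace (INR (S (S m)) * t) with (INR (S m) * t + t) by (rewrite !S_INR; ring).
    replace (INR m * t) with (INR (S m) * t - t) by (rewrite !S_INR; ring).
    rewrite sin_plus, sin_minus. ring.
Qed.

Lemma Dk_0 n : Dk n 0 = INR n.
Proof.
  induction n as [| |m IH] using two_step.
  - reflexivity.
  - reflexivity.
  - rewrite Dk_SS, IH, Rmult_0_r, cos_0, !S_INR. ring.
Qed.

Lemma Dk_neg n t : Dk n (- t) = Dk n t.
Proof.
  induction n as [| |m IH] using two_step.
  - reflexivity.
  - reflexivity.
  - rewrite !Dk_SS, IH.
    replace (INR (S m) * - t) with (- (INR (S m) * t)) by ring. rewrite cos_neg. ring.
Qed.

Lemma Dk_mono n t1 t2 : 0 <= t1 -> t1 <= t2 -> INR n * t2 <= PI -> Dk n t2 <= Dk n t1.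
Proof.
  induction n as [| |m IH] using two_step.
  - intros; simpl; lra.
  - intros; simpl; lra.
  - intros H0 H1 H. rewrite !Dk_SS.
    pose proof (pos_INR m).
    assert (HS : INR (S (S m)) = INR m + 2) by (rewrite !S_INR; ring).
    assert (HS1 : INR (S m) = INR m + 1) by (rewrite S_INR; ring).
    rewrite HS in H.
    assert (INR m * t2 <= PI) by nra.
    assert (cos (INR (S m) * t2) <= cos (INR (S m) * t1)).
    { rewrite HS1. apply cos_decr_1; nra. }
    specialize (IH H0 H1 H3). lra.
Qed.

Lemma abs_sin_le z : 0 <= z -> Rabs (sin z) <= z.
Proof.
  intros Hz. destruct (Rle_dec z 1).
  - destruct (Req_dec z 0) as [E|E].
    + subst. rewrite sin_0, Rabs_R0. lra.
    + assert (0 < sin z) by (apply sin_gt_0; pose proof PI_RGT_0; pose proof PI2_1; lra).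
      rewrite Rabs_pos_eq by lra. left; apply sin_lt_x; lra.
  - pose proof (SIN_bound z). apply Rabs_le; lra.
Qed.

Lemma cos_diff_le a b : 0 <= a -> a <= b -> cos a - cos b <= (b*b - a*a)/2.
Proof.
  intros Ha Hab. rewrite form2.
  replace ((a - b)/2) with (- ((b-a)/2)) by field. rewrite sin_neg.
  pose proof (abs_sin_le ((b-a)/2) ltac:(lra)) as H1.
  pose proof (abs_sin_le ((a+b)/2) ltac:(lra)) as H2.
  assert (E : -2 * - sin ((b - a) / 2) * sin ((a + b) / 2) <= 2 * (Rabs (sin ((b - a) / 2)) * Rabs (sin ((a + b) / 2)))).
  { rewrite <- Rabs_mult. pose proof (Rle_abs (sin ((b - a) / 2) * sin ((a + b) / 2))). lra. }
  assert (Rabs (sin ((b - a) / 2)) * Rabs (sin ((a + b) / 2)) <= ((b-a)/2) * ((a+b)/2)).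
  { apply Rmult_le_compat; auto using Rabs_pos. }
  nra.
Qed.

Definition cq (n : nat) : R := INR n * (INR n * INR n - 1) / 6.

Lemma Dk_lip n A B : 0 <= A -> A <= B -> Dk n A - Dk n B <= cq n * (B*B - A*A).
Proof.
  intros HA HAB. induction n as [| |m IH] using two_step.
  - unfold cq; simpl. nra.
  - unfold cq; simpl. nra.
  - rewrite !Dk_SS.
    pose proof (pos_INR m).
    assert (HS1 : INR (S m) = INR m + 1) by (rewrite S_INR; ring).
    pose proof (cos_diff_le (INR (S m) * A) (INR (S m) * B) ltac:(nra) ltac:(nra)) as C.
    assert (E : cq (S (S m)) = cq m + INR (S m) * INR (S m)).
    { unfold cq. rewrite !S_INR. field. }
    rewrite E. nra.
Qed.

Lemma Dk_pos n t : (1 <= n)%nat -> 0 <= t -> INR n * t < PI -> 0 < Dk n t.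
Proof.
  intros Hn Ht H.
  assert (Hn' : 1 <= INR n) by (apply (le_INR 1); lia).
  destruct (Req_dec t 0) as [E|E].
  - subst. rewrite Dk_0. lra.
  - assert (0 < sin t) by (apply sin_gt_0; nra).
    assert (0 < sin (INR n * t)) by (apply sin_gt_0; nra).
    pose proof (Dk_sin n t). nra.
Qed.


Section Core.
Variables (Q a L K beta : R) (F psi : R -> R).
Hypothesis HQ : 3 <= Q.
Hypothesis HK0 : 0 <= K.
Hypothesis Hper : forall y (k:Z), psi (y + IZR k) = psi y.
Hypothesis Hlip : forall x y, Rabs (psi x - psi y) <= L * Rabs (x - y).
Hypothesis HE : forall x, a <= x <= a + 1/Q -> F x + psi x - psi (Q*x) = beta.
Hypothesis HFK : forall x1 x2, a <= x1 -> x1 <= x2 -> x2 <= a + 1/Q -> F x1 - F x2 <= K*(x2-x1).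

Lemma block m y : Q*a + IZR m <= y <= Q*a + IZR m + 1 ->
  a <= (y - IZR m)/Q <= a + 1/Q /\ psi y = F ((y - IZR m)/Q) + psi ((y - IZR m)/Q) - beta.
Proof.
  intros Hy. assert (Hb : a <= (y - IZR m)/Q <= a + 1/Q).
  { split.
    - apply Rmult_le_reg_r with Q; [lra|]. unfold Rdiv. rewrite Rmult_assoc, Rinv_l, Rmult_1_r by lra. nra.
    - apply Rmult_le_reg_r with Q; [lra|]. unfold Rdiv. rewrite Rmult_assoc, Rinv_l, Rmult_1_r by lra.
      rewrite Rmult_plus_distr_r, Rmult_assoc, Rinv_l, Rmult_1_r by lra. nra. }
  split; [exact Hb|].
  pose proof (HE _ Hb) as E.
  replace (Q * ((y - IZR m) / Q)) with (y + IZR (- m)) in E by (rewrite opp_IZR; field; lra).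
  rewrite Hper in E. lra.
Qed.

Lemma split_int u v : u <= v -> v <= u + 1 ->
  exists m, (Q*a + IZR m <= u /\ v <= Q*a + IZR m + 1) \/
            (Q*a + IZR m <= u <= Q*a + IZR m + 1 /\ Q*a + IZR m + 1 <= v <= Q*a + IZR (m+1) + 1).
Proof.
  intros H1 H2. destruct (base_Int_part (u - Q*a)) as [B1 B2].
  exists (Int_part (u - Q*a)).
  rewrite plus_IZR.
  destruct (Rle_dec v (Q*a + IZR (Int_part (u - Q*a)) + 1)).
  - left. split; lra.
  - right. simpl (IZR 1). split; split; lra.
Qed.

Lemma L_nonneg : 0 <= L.
Proof.
  pose proof (Hlip 1 0) as H. rewrite Rminus_0_r, Rabs_R1, Rmult_1_r in H.
  pose proof (Rabs_pos (psi 1 - psi 0)). lra.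
Qed.

Lemma step_block (B : R) m u v :
  (forall u v, a <= u -> u <= v -> v <= a + 1/Q -> psi u - psi v <= B*(v-u)) ->
  u <= v -> Q*a + IZR m <= u -> v <= Q*a + IZR m + 1 ->
  psi u - psi v <= (K + B)/Q * (v - u).
Proof.
  intros IH H1 H2 H3.
  destruct (block m u ltac:(lra)) as [Bu Eu].
  destruct (block m v ltac:(lra)) as [Bv Ev].
  rewrite Eu, Ev.
  assert (Hle : (u - IZR m)/Q <= (v - IZR m)/Q).
  { unfold Rdiv. apply Rmult_le_compat_r; [apply Rlt_le, Rinv_0_lt_compat; lra | lra]. }
  pose proof (HFK _ _ (proj1 Bu) Hle (proj2 Bv)).
  pose proof (IH _ _ (proj1 Bu) Hle (proj2 Bv)).
  replace ((v - IZR m) / Q - (u - IZR m) / Q) with ((v-u)/Q) in * by (field; lra).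
  replace ((K + B) / Q * (v - u)) with (K * ((v - u) / Q) + B * ((v - u) / Q)) by (field; lra).
  lra.
Qed.

Lemma Pn (n : nat) : forall u v, a <= u -> u <= v -> v <= a + 1/Q ->
  psi u - psi v <= (K/(Q-1) + L/Q^n)*(v-u).
Proof.
  induction n as [|n IH]; intros u v H1 H2 H3.
  - simpl. replace (K / (Q - 1) + L / 1) with (K/(Q-1) + L) by (field; lra).
    pose proof (Hlip u v). rewrite (Rabs_minus_sym u v), (Rabs_pos_eq (v-u)) in H by lra.
    pose proof (Rle_abs (psi u - psi v)).
    assert (0 <= K/(Q-1)) by (apply Rmult_le_pos; [lra| apply Rlt_le, Rinv_0_lt_compat; lra]).
    nra.
  - assert (Hq : 0 < Q^n) by (apply pow_lt; lra).
    assert (EB : K / (Q - 1) + L / Q ^ S n = (K + (K / (Q - 1) + L / Q ^ n))/Q)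
      by (simpl; field; lra).
    rewrite EB.
    assert (Q*a <= 1 + Q*a). lra.
    assert (Hlen : v <= u + 1).
    { assert (1/Q <= 1) by (apply Rmult_le_reg_r with Q; [lra|]; field_simplify; lra). lra. }
    destruct (split_int u v H2 Hlen) as [m [[C1 C2]|[[C1 C2] [C3 C4]]]].
    + apply step_block with m; auto.
    + set (p := Q * a + IZR m + 1) in *.
      pose proof (step_block _ m u p IH C2 C1 ltac:(unfold p; lra)).
      assert (Ep : p = Q*a + IZR (m+1)) by (unfold p; rewrite plus_IZR; simpl; ring).
      pose proof (step_block _ (m+1) p v IH C3 ltac:(lra) C4).
      set (BB := (K + (K / (Q - 1) + L / Q ^ n)) / Q) in *.
      replace (psi u - psi v) with ((psi u - psi p) + (psi p - psi v)) by ring.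
      replace (BB * (v - u)) with (BB*(p-u) + BB*(v-p)) by ring.
      lra.
Qed.

Lemma core_G u v : a <= u -> u <= v -> v <= a + 1/Q -> psi u - psi v <= K/(Q-1)*(v-u).
Proof.
  intros H1 H2 H3.
  destruct (Rle_dec (psi u - psi v) (K/(Q-1)*(v-u))) as [|Hn]; [assumption|exfalso].
  set (d := psi u - psi v - K/(Q-1)*(v-u)).
  assert (Hd : 0 < d) by (unfold d; lra).
  pose proof L_nonneg.
  destruct (Pow_x_infinity Q ltac:(rewrite Rabs_pos_eq; lra) (L*(v-u)/d + 1)) as [N HN].
  specialize (HN N (Nat.le_refl N)). rewrite Rabs_pos_eq in HN by (apply pow_le; lra).
  pose proof (Pn N u v H1 H2 H3).
  assert (HqN : 0 < Q^N) by (apply pow_lt; lra).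
  assert (L / Q^N * (v-u) < d).
  { assert (L*(v-u) < d * Q^N).
    { assert (Hh : L*(v-u)/d < Q^N) by lra.
      apply Rmult_lt_reg_r with (/d); [apply Rinv_0_lt_compat; lra|].
      replace (d * Q^N * /d) with (Q^N) by (field; lra). exact Hh. }
    apply Rmult_lt_reg_r with (Q^N); [lra|].
    replace (L / Q ^ N * (v - u) * Q ^ N) with (L*(v-u)) by (field; lra). lra. }
  unfold d in *. nra.
Qed.

Hypothesis (M : R).
Hypothesis HM : forall x1 x2, a <= x1 -> x1 <= x2 -> x2 <= a + 1/Q -> F x1 - F x2 <= M.
Hypothesis HL : forall x, a <= x -> x <= a + 1/(Q*Q) -> F a <= F x.

Lemma core_main : F (a + 1/Q) - F a <= M + K/(Q*Q*(Q-1)).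
Proof.
  set (b := a + 1/Q) in *.
  assert (Eq : F b - F a = psi a - psi b).
  { pose proof (HE a ltac:(unfold b; split; [lra| assert (0 < 1/Q) by (apply Rdiv_lt_0_compat; lra); lra])).
    pose proof (HE b ltac:(unfold b; split; [assert (0 < 1/Q) by (apply Rdiv_lt_0_compat; lra); lra| lra])).
    replace (Q*b) with (Q*a + IZR 1) in H0 by (unfold b; simpl; field; lra).
    rewrite Hper in H0. lra. }
  rewrite Eq.
  assert (HbQ : 0 < 1/Q) by (apply Rdiv_lt_0_compat; lra).
  assert (Hab : a < b) by (unfold b; lra).
  assert (Hlen : b <= a + 1) by (unfold b; assert (1/Q <= 1) by (apply Rmult_le_reg_r with Q; [lra|]; field_simplify; lra); lra).
  assert (EK : K/(Q*Q*(Q-1)) = K/(Q-1) * (1/(Q*Q))) by (field; lra).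
  destruct (split_int a b ltac:(unfold b; lra) Hlen) as [m [[C1 C2]|[[C1 C2] [C3 C4]]]].
  - destruct (block m a ltac:(lra)) as [Ba Ea].
    destruct (block m b ltac:(lra)) as [Bb Eb].
    rewrite Ea, Eb.
    assert (Hd : (b - IZR m) / Q - (a - IZR m) / Q = 1/(Q*Q)) by (unfold b; field; lra).
    assert (Hle : (a - IZR m)/Q <= (b - IZR m)/Q) by (assert (0 < 1/(Q*Q)) by (apply Rdiv_lt_0_compat; nra); lra).
    pose proof (HM _ _ (proj1 Ba) Hle (proj2 Bb)).
    pose proof (core_G _ _ (proj1 Ba) Hle (proj2 Bb)).
    rewrite Hd in H0. lra.
  - destruct (block m a ltac:(lra)) as [Ba Ea].
    set (p := Q * a + IZR m + 1) in *.
    destruct (block m p ltac:(unfold p in *; lra)) as [Bp Ep].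
    assert (Ep2 : p = Q*a + IZR (m+1)) by (unfold p; rewrite plus_IZR; simpl; ring).
    destruct (block (m+1) p ltac:(lra)) as [Bp' Ep'].
    destruct (block (m+1) b ltac:(lra)) as [Bb Eb].
    assert (Xp : (p - IZR m)/Q = b) by (unfold p, b; field; lra).
    assert (Xp' : (p - IZR (m+1))/Q = a) by (rewrite Ep2; field; lra).
    rewrite Xp in Ep. rewrite Xp' in Ep'.
    replace (psi a - psi b) with ((psi a - psi p) + (psi p - psi b)) by ring.
    rewrite Ea at 1. rewrite Ep at 1. rewrite Ep' at 1. rewrite Eb at 1.
    set (xa := (a - IZR m)/Q) in *.
    set (xb := (b - IZR (m+1))/Q) in *.
    assert (Hxa : xa <= b) by (unfold xa; rewrite <- Xp; unfold Rdiv; apply Rmult_le_compat_r; [apply Rlt_le, Rinv_0_lt_compat; lra | lra]).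
    assert (Hxb : a <= xb) by (unfold xb; rewrite <- Xp'; unfold Rdiv; apply Rmult_le_compat_r; [apply Rlt_le, Rinv_0_lt_compat; lra | lra]).
    assert (Hsum : (b - xa) + (xb - a) = 1/(Q*Q)).
    { unfold xa, xb, b. rewrite plus_IZR. simpl (IZR 1). field. lra. }
    pose proof (HM _ _ (proj1 Ba) Hxa ltac:(unfold b; lra)).
    pose proof (HL xb Hxb ltac:(lra)).
    pose proof (core_G _ _ (proj1 Ba) Hxa ltac:(unfold b; lra)).
    pose proof (core_G a xb (Rle_refl a) Hxb (proj2 Bb)).
    assert (0 <= K/(Q-1)) by (apply Rmult_le_pos; [lra| apply Rlt_le, Rinv_0_lt_compat; lra]).
    rewrite EK. nra.
Qed.
End Core.


Lemma per_Z (psi : R -> R) : one_periodic psi -> forall y (k:Z), psi (y + IZR k) = psi y.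
Proof.
  intros Hp.
  assert (Hn : forall n y, psi (y + INR n) = psi y).
  { induction n as [|n IH]; intros y.
    - simpl. f_equal. ring.
    - rewrite S_INR. replace (y + (INR n + 1)) with ((y + INR n) + 1) by ring.
      rewrite Hp. apply IH. }
  intros y k. destruct (Z_le_gt_dec 0 k) as [H|H].
  - rewrite <- (Z2Nat.id k H), <- INR_IZR_INZ. apply Hn.
  - replace k with (- Z.of_nat (Z.to_nat (- k)))%Z by lia.
    rewrite opp_IZR, <- INR_IZR_INZ.
    rewrite <- (Hn (Z.to_nat (-k)) (y + - INR (Z.to_nat (- k)))).
    f_equal. ring.
Qed.

Lemma ln_le' x y : 0 < x -> x <= y -> ln x <= ln y.
Proof. intros H1 H2. destruct H2 as [H2|H2]. left; apply ln_increasing; lra. subst; lra. Qed.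

Lemma ln_diff_le x y : 0 < x -> 0 < y -> ln x - ln y <= (x - y)/y.
Proof.
  intros Hx Hy. pose proof (exp_ineq1_le (ln (x/y))) as H.
  rewrite exp_ln in H by (apply Rdiv_lt_0_compat; lra).
  unfold Rdiv in H. rewrite ln_mult, ln_Rinv in H by (try apply Rinv_0_lt_compat; lra).
  replace ((x - y)/y) with (x * /y - 1) by (field; lra). lra.
Qed.

Lemma sin_zero_small y : -1 < y < 1 -> sin (PI * y) = 0 -> y = 0.
Proof.
  intros Hy H. destruct (sin_eq_0_0 _ H) as [k Hk].
  pose proof PI_RGT_0.
  assert (Hk2 : y = IZR k) by (apply Rmult_eq_reg_l with PI; [lra|lra]).
  subst y. assert (k = 0%Z).
  { destruct Hy as [H1 H2]. apply lt_IZR in H2. apply lt_IZR in H1. lia. }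
  subst. reflexivity.
Qed.

Lemma f_c_eq q c x : (1 <= q)%nat -> - (1 / INR q) < x + c < 1 / INR q ->
  f_c q c x = ln (Dk q (PI * Rabs (x + c))) /\ 0 < Dk q (PI * Rabs (x + c)).
Proof.
  intros Hq Hy. set (y := x + c) in *.
  assert (HQ : 1 <= INR q) by (apply (le_INR 1); lia).
  assert (HQy : INR q * Rabs y < 1).
  { 
    assert (Rabs y < 1 / INR q) by (apply Rabs_def1; lra).
    apply Rmult_lt_reg_r with (/ INR q); [apply Rinv_0_lt_compat; lra|].
    replace (INR q * Rabs y * / INR q) with (Rabs y) by (field; lra). lra. }
  pose proof PI_RGT_0.
  assert (Hpos : 0 < Dk q (PI * Rabs y)).
  { apply Dk_pos; [lia| pose proof (Rabs_pos y); nra | nra]. }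
  split; [|exact Hpos].
  unfold f_c. fold y.
  assert (1/INR q <= 1) by (apply Rmult_le_reg_r with (INR q); [lra|]; field_simplify; lra).
  destruct (Req_EM_T (sin (PI * y)) 0) as [E|E].
  - apply sin_zero_small in E; [|lra]. rewrite E, Rabs_R0, Rmult_0_r, Dk_0. reflexivity.
  - f_equal.
    assert (Hs : sin (PI * INR q * y) = sin (PI * y) * Dk q (PI * y)).
    { rewrite Dk_sin. f_equal. ring. }
    rewrite Hs. replace (sin (PI * y) * Dk q (PI * y) / sin (PI * y)) with (Dk q (PI * y)) by (field; exact E).
    assert (Dk q (PI * y) = Dk q (PI * Rabs y)).
    { destruct (Rle_dec 0 y). rewrite Rabs_pos_eq by lra; reflexivity.
      rewrite Rabs_left by lra. rewrite <- Dk_neg. f_equal; ring. }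
    rewrite H1. apply Rabs_pos_eq. lra.
Qed.


Lemma lower q c lam : (3 <= q)%nat -> - (1 / INR q) - c < lam < - c ->
  pre_sturmian q c lam -> 3 / (8 * INR q) < lam + 1 / INR q + c.
Proof.
  intros Hq Hlam [_ [psi [beta [Hp [[L HL] Heq]]]]].
  set (Q := INR q) in *.
  assert (HQ : 3 <= Q) by (unfold Q; apply (le_INR 3) in Hq; simpl in Hq; lra).
  set (th := lam + 1/Q + c).
  destruct (Rlt_dec (3/(8*Q)) th) as [|Hth]; [assumption|exfalso].
  apply Rnot_lt_le in Hth.
  pose proof PI_RGT_0 as HPI.
  assert (HQ0 : 0 < 1/Q) by (apply Rdiv_lt_0_compat; lra).
  assert (Hth0 : 0 < th) by (unfold th; lra).
  set (ths := 3/(8*Q)).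
  assert (Hth' : th <= ths) by exact Hth.
  assert (Hths : ths * Q = 3/8) by (unfold ths; field; lra).
  assert (Hper := per_Z psi Hp).
  set (G := fun t => ln (Dk q (PI * t))).
  assert (Gmono : forall t1 t2, 0 <= t1 -> t1 <= t2 -> t2 < 1/Q -> G t2 <= G t1).
  { intros t1 t2 H1 H2 H3. unfold G. apply ln_le'.
    - apply Dk_pos; [lia|nra|]. fold Q.
      assert (t2 * Q < 1) by (apply Rmult_lt_reg_r with (/Q); [apply Rinv_0_lt_compat; lra|];
        replace (t2 * Q * / Q) with t2 by (field; lra); lra). nra.
    - apply Dk_mono; [nra|nra|]. fold Q.
      assert (t2 * Q < 1) by (apply Rmult_lt_reg_r with (/Q); [apply Rinv_0_lt_compat; lra|];
        replace (t2 * Q * / Q) with t2 by (field; lra); lra). nra. }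
  assert (Gpos : forall t, 0 <= t -> t < 1/Q -> 0 < Dk q (PI * t)).
  { intros t H1 H3. apply Dk_pos; [lia|nra|]. fold Q.
    assert (t * Q < 1) by (apply Rmult_lt_reg_r with (/Q); [apply Rinv_0_lt_compat; lra|];
        replace (t * Q * / Q) with t by (field; lra); lra). nra. }
  assert (Hths1 : ths < 1/Q) by (unfold ths; apply Rmult_lt_reg_r with Q; [lra|]; field_simplify; lra).
  assert (Hths0 : 0 < ths) by (unfold ths; apply Rdiv_lt_0_compat; lra).
  set (Ds := Dk q (PI * ths)).
  assert (HDs : 0 < Ds) by (apply Gpos; lra).
  assert (Hcq : 0 <= cq q) by (unfold cq; fold Q; apply Rmult_le_pos; [nra|lra]).
  set (K := cq q * (PI*PI) * (2*ths) / Ds).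
  assert (HK0 : 0 <= K).
  { unfold K. unfold Rdiv. apply Rmult_le_pos. apply Rmult_le_pos. apply Rmult_le_pos. exact Hcq. nra. lra. apply Rlt_le, Rinv_0_lt_compat; lra. }
  assert (Glip : forall A B, 0 <= A -> A <= B -> B <= ths -> G A - G B <= K * (B - A)).
  { intros A B H1 H2 H3. unfold G.
    assert (PA : 0 < Dk q (PI*A)) by (apply Gpos; lra).
    assert (PB : 0 < Dk q (PI*B)) by (apply Gpos; lra).
    eapply Rle_trans; [apply ln_diff_le; assumption|].
    pose proof (Dk_lip q (PI*A) (PI*B) ltac:(nra) ltac:(nra)) as DL.
    assert (DBs : Ds <= Dk q (PI*B)) by (apply Dk_mono; [nra|nra|]; fold Q; nra).
    set (X := cq q * (PI*PI) * (2*ths) * (B - A)).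
    assert (HX : 0 <= X) by (unfold X; apply Rmult_le_pos; [apply Rmult_le_pos; [apply Rmult_le_pos; [exact Hcq| nra] | lra] | lra]).
    assert (E1 : Dk q (PI * A) - Dk q (PI * B) <= X).
    { unfold X. eapply Rle_trans; [exact DL|].
      replace (PI * B * (PI * B) - PI * A * (PI * A)) with ((PI*PI) * ((B-A)*(B+A))) by ring.
      assert ((B-A)*(B+A) <= (B-A)*(2*ths)) by nra.
      assert (0 <= PI*PI) by nra.
      assert (0 <= cq q * (PI*PI)) by nra. nra. }
    apply Rle_trans with (X / Dk q (PI*B)).
    { unfold Rdiv; apply Rmult_le_compat_r; [apply Rlt_le, Rinv_0_lt_compat; lra| exact E1]. }
    replace (K * (B-A)) with (X / Ds) by (unfold K, X; field; lra).
    unfold Rdiv. apply Rmult_le_compat_l; [exact HX|]. apply Rinv_le_contravar; lra. }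
  set (F := f_c q c).
  assert (FG : forall x, lam <= x <= lam + 1/Q -> F x = G (Rabs (x + c)) /\ Rabs (x+c) < 1/Q).
  { intros x Hx. destruct (f_c_eq q c x ltac:(lia) ltac:(fold Q; unfold th in *; lra)) as [E _].
    split; [exact E|]. apply Rabs_def1; unfold th in *; lra. }
  assert (HE : forall x, lam <= x <= lam + 1/Q -> F x + psi x - psi (Q*x) = beta).
  { intros x Hx. assert (Hc : in_C q lam x) by (exists 0%Z; rewrite Rplus_0_r; fold Q; lra).
    pose proof (Heq x Hc) as E. unfold Tq, frac_part in E. fold Q in E.
    replace (Q * x - IZR (Int_part (Q * x))) with (Q*x + IZR (- Int_part (Q*x))) in E
      by (rewrite opp_IZR; ring).
    rewrite Hper in E. exact E. }
  assert (Hyr : forall x, lam <= x <= lam + 1/Q -> th - 1/Q <= x + c <= th) by (intros; unfold th; lra).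
  assert (HFK : forall x1 x2, lam <= x1 -> x1 <= x2 -> x2 <= lam + 1/Q -> F x1 - F x2 <= K*(x2-x1)).
  { intros x1 x2 H1 H2 H3.
    destruct (FG x1 ltac:(lra)) as [E1 B1]. destruct (FG x2 ltac:(lra)) as [E2 B2].
    pose proof (Hyr x1 ltac:(lra)). pose proof (Hyr x2 ltac:(lra)).
    rewrite E1, E2.
    assert (K * (x2 - x1) >= 0) by (apply Rle_ge, Rmult_le_pos; lra).
    destruct (Rle_dec (Rabs (x2 + c)) (Rabs (x1 + c))) as [C|C].
    - pose proof (Gmono _ _ (Rabs_pos (x2+c)) C B1). lra.
    - apply Rnot_le_lt in C.
      assert (Hy2 : 0 < x2 + c).
      { destruct (Rle_dec (x2 + c) 0); [|lra]. exfalso.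
        rewrite (Rabs_left1 (x2+c)) in C by lra.
        pose proof (Rle_abs (-(x1+c))). rewrite Rabs_Ropp in H5. lra. }
      rewrite (Rabs_pos_eq (x2+c)) in * by lra.
      pose proof (Glip (Rabs (x1+c)) (x2+c) (Rabs_pos _) (Rlt_le _ _ C) ltac:(lra)).
      pose proof (Rle_abs (x1 + c)).
      assert (K * (x2 + c - Rabs (x1 + c)) <= K * (x2 - x1)) by (apply Rmult_le_compat_l; lra).
      lra. }
  set (b := lam + 1/Q).
  assert (Fb : F b = G th).
  { destruct (FG b ltac:(unfold b; lra)) as [E _]. rewrite E. f_equal.
    unfold b, th. apply Rabs_pos_eq. lra. }
  assert (G0 : G 0 = ln Q) by (unfold G; rewrite Rmult_0_r, Dk_0; reflexivity).
  assert (Hth1 : th < 1/Q) by lra.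
  set (M := ln Q - F b).
  assert (HM : forall x1 x2, lam <= x1 -> x1 <= x2 -> x2 <= lam + 1/Q -> F x1 - F x2 <= M).
  { intros x1 x2 H1 H2 H3.
    destruct (FG x1 ltac:(lra)) as [E1 B1]. destruct (FG x2 ltac:(lra)) as [E2 B2].
    pose proof (Hyr x1 ltac:(lra)). pose proof (Hyr x2 ltac:(lra)).
    unfold M. rewrite E1, E2, Fb, <- G0.
    pose proof (Gmono 0 (Rabs (x1+c)) (Rle_refl 0) (Rabs_pos _) B1).
    pose proof (Gmono 0 th (Rle_refl 0) ltac:(lra) Hth1).
    destruct (Rle_dec (Rabs (x2 + c)) th) as [C|C].
    - pose proof (Gmono _ _ (Rabs_pos _) C Hth1). lra.
    - apply Rnot_le_lt in C.
      assert (x2 + c < 0).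
      { destruct (Rle_dec 0 (x2+c)); [|lra]. rewrite Rabs_pos_eq in C; lra. }
      rewrite (Rabs_left (x2+c)) in * by lra.
      rewrite (Rabs_left (x1+c)) in * by lra.
      pose proof (Gmono (-(x2+c)) (-(x1+c)) ltac:(lra) ltac:(lra) B1). lra. }
  assert (HLq : forall x, lam <= x -> x <= lam + 1/(Q*Q) -> F lam <= F x).
  { intros x H1 H2.
    assert (1/(Q*Q) <= 1/Q) by (apply Rmult_le_reg_r with (Q*Q); [nra|]; field_simplify; nra).
    destruct (FG lam ltac:(lra)) as [E1 B1]. destruct (FG x ltac:(lra)) as [E2 B2].
    rewrite E1, E2.
    assert (Hq2 : 1/(Q*Q) <= 5/(8*Q)) by (apply Rmult_le_reg_r with (8*Q*Q); [nra|]; field_simplify; nra).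
    assert (E5 : 5/(8*Q) = 5/8*(1/Q)) by (field; lra).
    assert (E3 : ths = 3/8*(1/Q)) by (unfold ths; field; lra).
    assert (x + c <= 0) by (unfold th in *; lra).
    rewrite (Rabs_left1 (x+c)) in * by lra.
    rewrite (Rabs_left1 (lam+c)) in * by lra.
    apply Gmono; lra. }
  pose proof (core_main Q lam L K beta F psi HQ HK0 Hper HL HE HFK M HM HLq) as CM.
  fold b in CM. unfold M in CM.
  set (a5 := 1/Q - th).
  assert (Fa : F lam = G a5).
  { destruct (FG lam ltac:(lra)) as [E _]. rewrite E. f_equal.
    unfold a5, th. rewrite Rabs_left; lra. }
  rewrite Fa, Fb in CM.
  assert (Hg1 : G ths <= G th) by (apply Gmono; lra).
  assert (Hg2 : G a5 <= G (5/(8*Q))).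
  { apply Gmono. apply Rlt_le, Rdiv_lt_0_compat; lra.
    unfold a5. assert (5/(8*Q) = 1/Q - ths) by (unfold ths; field; lra). lra.
    unfold a5; lra. }
  assert (CM2 : 2 * G ths - G (5/(8*Q)) - ln Q <= K / (Q*Q*(Q-1))) by lra.
  pose proof (numeric Q HQ) as NUM. cbv zeta in NUM.
  set (x := PI/(8*Q)) in NUM.
  set (s := sin (3*PI/8)) in NUM.
  assert (Hx : 0 < x) by (unfold x; apply Rdiv_lt_0_compat; lra).
  assert (S3 : 0 < sin (3*x)) by (apply sin_gt_0; unfold x; [nra| apply Rmult_lt_reg_r with (8*Q); [lra|]; field_simplify; nra]).
  assert (S5 : 0 < sin (5*x)) by (apply sin_gt_0; unfold x; [nra| apply Rmult_lt_reg_r with (8*Q); [lra|]; field_simplify; nra]).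
  assert (Hs : 0 < s) by (unfold s; apply sin_gt_0; nra).
  assert (D3 : Ds = s / sin (3*x)).
  { unfold Ds. pose proof (Dk_sin q (3*x)) as E. fold Q in E.
    replace (Q * (3*x)) with (3*PI/8) in E by (unfold x; field; lra).
    replace (PI * ths) with (3*x) by (unfold ths, x; field; lra).
    fold s in E. field_simplify_eq; [lra|lra]. }
  assert (D5 : Dk q (PI * (5/(8*Q))) = s / sin (5*x)).
  { pose proof (Dk_sin q (5*x)) as E. fold Q in E.
    replace (Q * (5*x)) with (PI - 3*PI/8) in E by (unfold x; field; lra).
    rewrite sin_PI_x in E. fold s in E.
    replace (PI * (5/(8*Q))) with (5*x) by (unfold x; field; lra).
    field_simplify_eq; [lra|lra]. }
  assert (LHS : 2 * G ths - G (5/(8*Q)) - ln Q = ln (s * sin (5*x) / (Q * sin (3*x)^2))).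
  { unfold G. fold Ds. rewrite D3, D5.
    replace (s * sin (5 * x) / (Q * sin (3 * x) ^ 2)) with
      ((s / sin (3*x)) * (s / sin (3*x)) * / (s / sin (5*x)) * / Q) by (field; repeat split; lra).
    assert (0 < s / sin (3*x)) by (apply Rdiv_lt_0_compat; lra).
    assert (0 < s / sin (5*x)) by (apply Rdiv_lt_0_compat; lra).
    rewrite !ln_mult, !ln_Rinv; try lra; try (apply Rinv_0_lt_compat; lra);
      try (apply Rmult_lt_0_compat; lra); try (repeat apply Rmult_lt_0_compat; try lra; apply Rinv_0_lt_compat; lra). }
  assert (RHS : K / (Q*Q*(Q-1)) = (Q+1)*PI^2*sin (3*x)/(8*Q^2*s)).
  { unfold K, cq. fold Q. rewrite D3. unfold ths. field. repeat split; lra. }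
  lra.
Qed.


Lemma f_c_neg q c x : f_c q (-c) x = f_c q c (-x).
Proof.
  unfold f_c.
  replace (- x + c) with (- (x + - c)) by ring.
  set (y := x + - c).
  replace (PI * - y) with (- (PI * y)) by ring.
  replace (PI * INR q * - y) with (- (PI * INR q * y)) by ring.
  rewrite !sin_neg.
  destruct (Req_EM_T (sin (PI * y)) 0) as [E|E];
  destruct (Req_EM_T (- sin (PI * y)) 0) as [E'|E']; try lra.
  replace (- sin (PI * INR q * y) / - sin (PI * y)) with (sin (PI * INR q * y) / sin (PI * y)) by (field; exact E). reflexivity.
Qed.

Lemma Tq_neg q x : exists k : Z, Tq q (- x) = - Tq q x + IZR k.
Proof.
  unfold Tq, frac_part. exists (- (Int_part (INR q * x) + Int_part (INR q * - x)))%Z.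
  rewrite opp_IZR, plus_IZR. replace (INR q * - x) with (- (INR q * x)) by ring. ring.
Qed.

Lemma reflect_sturm q c lam : pre_sturmian q c lam -> pre_sturmian q (-c) (- lam - 1 / INR q).
Proof.
  intros [[Lf HLf] [psi [beta [Hp [[L HL] Heq]]]]].
  assert (Hper := per_Z psi Hp).
  assert (HC : forall x, in_C q (- lam - 1 / INR q) x -> in_C q lam (- x)).
  { intros x [k Hk]. exists (- k)%Z. rewrite opp_IZR. lra. }
  split.
  - exists Lf. intros x y Hx Hy. rewrite !f_c_neg.
    specialize (HLf (-x) (-y) (HC x Hx) (HC y Hy)).
    replace (- x - - y) with (- (x - y)) in HLf by ring. rewrite Rabs_Ropp in HLf. exact HLf.
  - exists (fun x => psi (- x)), beta. split; [|split].
    + intros x. replace (- (x + 1)) with (- x + IZR (-1)) by (simpl; ring). apply Hper.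
    + exists L. intros x y. replace (x - y) with (- (- x - - y)) by ring. rewrite Rabs_Ropp. apply HL.
    + intros x Hx. rewrite f_c_neg. rewrite <- (Heq (-x) (HC x Hx)).
      destruct (Tq_neg q x) as [k Hk]. rewrite Hk, Hper.
      replace (- - Tq q x) with (Tq q x) by ring.
      replace (- - (Tq q x)) with (Tq q x) by ring. ring.
Qed.

Theorem lemma5p7 (q : nat) (c lam : R) :
  (3 <= q)%nat ->
  - (1 / INR q) - c < lam < - c ->
  pre_sturmian q c lam ->
  3 / (8 * INR q) < lam + 1 / INR q + c < 5 / (8 * INR q).
Proof.
  intros Hq Hl Hs. split.
  - apply lower; assumption.
  - assert (HQ : 3 <= INR q) by (apply (le_INR 3) in Hq; simpl in Hq; lra).
    pose proof (lower q (-c) (- lam - 1 / INR q) Hq ltac:(lra) (reflect_sturm q c lam Hs)) as H.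
    assert (5 / (8 * INR q) = 1 / INR q - 3 / (8 * INR q)) by (field; lra).
    lra.
Qed.
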